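(* (1) For every positive divisor $\delta$ of $\lambda(2)$, $\displaystyle\sum_{\substack{a\in U_2\\ \mathrm{ind}_2(a)=\delta}}a\equiv 1\pmod 2$. (2) For every positive divisor $\delta$ of $\lambda(4)$, $\displaystyle\sum_{\substack{a\in U_4\\ \mathrm{ind}_4(a)=\delta}}a\equiv (-1)^{\delta+1}\pmod 4$. (3) For every positive divisor $\delta$ of $\lambda(8)$, $\displaystyle\sum_{\substack{a\in U_8\\ \mathrm{ind}_8(a)=\delta}}a\equiv (-1)^{\delta+1}\pmod 8$. (4) Let $\alpha>3$ and $\delta=2^{\beta}$ with $1<\beta\le\alpha-2$. Then $\displaystyle\sum_{\substack{a\in U_{2^\alpha}\\ \mathrm{ind}_{2^\alpha}(a)=\delta}}a\equiv 0\pmod{2^\alpha}$. (5) Let $p$ be an odd prime, $\alpha$ a positive integer, and $\delta$ a positive divisor of $\lambda(p^\alpha)=\phi(p^\alpha)$. Then $$\sum_{\substack{a\in U_{p^\alpha}\\ \mathrm{ind}_{p^\alpha}(a)=\delta}}a\equiv \mu\big((\delta,p-1)\big)\,\phi\big(p^{\mathrm{ord}_p(\delta)}\big)\pmod{p^\alpha}.$$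
   Context: $U_m$ denotes the set of invertible residue classes in $\mathbb{Z}/m\mathbb{Z}$ (sums run over one representative of each such class). For $a$ coprime to $m$, $\mathrm{ind}_m(a)$ is the multiplicative order of $a$ modulo $m$. $\lambda(m)$ is the Carmichael function: the smallest $k>0$ such that $a^k\equiv 1\pmod m$ for all $a\in U_m$. $\mu$ is the Möbius function, $\phi$ Euler's totient function, $(x,y)$ the greatest common divisor, and $\mathrm{ord}_p(n)=\max\{k: p^k\mid n\}$. *)

(* Defs.v *)
From mathcomp Require Import all_boot all_order all_algebra.
Set Implicit Arguments. Unset Strict Implicit. Unset Printing Implicit Defensive.

(* Multiplicative order of a modulo m: the least k > 0 with a^k = 1 (mod m).
   For coprime a and m >= 1 this order is <= phi(m) <= m, so searching
   k in 1..m finds it; for non-coprime a the value is irrelevant (m+1). *)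
Definition ind (m a : nat) : nat :=
  (find (fun k => a ^ k.+1 == 1 %[mod m]) (iota 0 m)).+1.

(* Carmichael function: the least k > 0 with a^k = 1 (mod m) for every
   a in U_m (residues 0 <= a < m coprime to m).  Again lambda(m) <= m. *)
Definition carmichael (m : nat) : nat :=
  (find (fun k => [forall a : 'I_m, coprime a m ==> (a ^ k.+1 == 1 %[mod m])])
        (iota 0 m)).+1.

(* Moebius function on positive integers (mu 0 := 0 by convention). *)
Definition moebius (n : nat) : int :=
  if n == 0 then 0%R
  else if all (fun p => logn p n == 1) (primes n)
       then ((-1) ^+ size (primes n))%R else 0%R.

Definition sum_ind (m d : nat) : nat :=
  \sum_(a < m | coprime a m && (ind m a == d)) a.

(* Main.v *)
Require Import Defs.
From mathcomp Require Import all_boot all_order all_algebra all_fingroup all_solvable zify ring.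
Set Implicit Arguments. Unset Strict Implicit. Unset Printing Implicit Defensive.

Lemma totient_le n : totient n <= n.
Proof.
rewrite totient_count_coprime.
apply: (@leq_trans (\sum_(0 <= d < n) 1)); last by rewrite sum_nat_const_nat muln1 subn0.
by apply: leq_sum => i _; exact: leq_b1.
Qed.

Lemma modX1 m a o c : a ^ o = 1 %[mod m] -> a ^ (o * c) = 1 %[mod m].
Proof. by move=> h; rewrite expnM -modnXm h modnXm exp1n. Qed.

Lemma modXe m a o k : a ^ o = 1 %[mod m] -> a ^ k = a ^ (k %% o) %[mod m].
Proof.
move=> h; rewrite {1}(divn_eq k o) expnD (mulnC (k %/ o) o) -modnMml modX1 // modnMml mul1n.
by [].

Qed.

Lemma ind_spec m a : 1 < m -> coprime a m ->
  forall k, (a ^ k == 1 %[mod m]) = (ind m a %| k).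
Proof.
move=> m1 cop.
set P := (fun k => a ^ k.+1 == 1 %[mod m]).
have hasP : has P (iota 0 m).
  apply/hasP; exists (totient m).-1.
    rewrite mem_iota add0n /=.
    have := totient_le m; have := totient_gt0 m; rewrite (ltnW m1) /=. lia.
  by rewrite /P prednK ?totient_gt0 ?(ltnW m1) // Euler_exp_totient.
have fl : find P (iota 0 m) < m by rewrite -{2}(size_iota 0 m) -has_find.
have Hn := nth_find 0 hasP. rewrite nth_iota // add0n in Hn.
have Hb : forall j, j < find P (iota 0 m) -> ~~ P j.
  move=> j lj; have jm : j < m by apply: ltn_trans fl.
  by have := before_find 0 lj; rewrite nth_iota ?add0n // => ->.
rewrite /ind -/P.
move: Hn Hb; set i := find P (iota 0 m) => Hn Hb.
move=> k; apply/idP/idP.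
- move/eqP=> hk.
  have e := modXe k (eqP Hn). rewrite hk in e.
  case E: (k %% i.+1) => [|r]; first by apply/dvdnP; exists (k %/ i.+1); rewrite {1}(divn_eq k i.+1) E addn0.
  have : r < i. have := ltn_pmod k (ltn0Sn i). rewrite E. lia.
  move/Hb; rewrite /P -E -e; by rewrite eqxx.
- move/dvdnP=> [c ->]; rewrite mulnC; apply/eqP; exact: modX1 (eqP Hn).
Qed.

Lemma ind_gt0 m a : 0 < ind m a. Proof. by []. Qed.

Lemma carm_dvd m : 1 < m -> carmichael m %| totient m.
Proof.
move=> m1.
set P := (fun k => [forall a : 'I_m, coprime a m ==> (a ^ k.+1 == 1 %[mod m])]).
have hasP : has P (iota 0 m).
  apply/hasP; exists (totient m).-1.
    rewrite mem_iota add0n /=.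
    have := totient_le m; have := totient_gt0 m; rewrite (ltnW m1) /=. lia.
  rewrite /P prednK ?totient_gt0 ?(ltnW m1) //.
  by apply/forallP => a; apply/implyP => ca; rewrite Euler_exp_totient.
have fl : find P (iota 0 m) < m by rewrite -{2}(size_iota 0 m) -has_find.
have Hn := nth_find 0 hasP. rewrite nth_iota // add0n in Hn.
have Hb : forall j, j < find P (iota 0 m) -> ~~ P j.
  move=> j lj; have jm : j < m by apply: ltn_trans fl.
  by have := before_find 0 lj; rewrite nth_iota ?add0n // => ->.
rewrite /carmichael -/P.
move: Hn Hb; set i := find P (iota 0 m) => Hn Hb.
case E: (totient m %% i.+1) => [|r]; first by apply/dvdnP; exists (totient m %/ i.+1); rewrite {1}(divn_eq (totient m) i.+1) E addn0.
have : r < i. have := ltn_pmod (totient m) (ltn0Sn i). rewrite E. lia.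
move/Hb/negP; case; apply/forallP => a; apply/implyP => ca.
have := forallP Hn a; rewrite ca /= => /eqP e.
by rewrite -E -(modXe _ e) Euler_exp_totient.
Qed.

Lemma mod_inj m h a b : coprime h m -> a < m -> b < m ->
  h * a = h * b %[mod m] -> a = b.
Proof.
move=> ch am bm.
wlog ab : a b am bm / b <= a.
  move=> W E; case: (leqP b a) => l; first exact: W.
  by apply/esym/W => //; apply: ltnW.
move/eqP; rewrite eqn_mod_dvd ?leq_mul2l ?ab ?orbT // -mulnBr.
rewrite Gauss_dvdr; last by rewrite coprime_sym.
move=> d; case E: (a - b) => [|x]; first lia.
rewrite E in d; have := dvdn_leq (ltn0Sn x) d; lia.
Qed.

Lemma sum_reindex m h (P : pred nat) : 0 < m -> coprime h m ->
  (forall a, a < m -> P (h * a %% m) = P a) ->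
  \sum_(a < m | P a) a = \sum_(a < m | P a) (h * a %% m).
Proof.
move=> m0 ch HP.
pose f (a : 'I_m) : 'I_m := Ordinal (ltn_pmod (h * a) m0).
have fi : injective f.
  move=> a b /(congr1 val) /= e; apply: val_inj => /=.
  by apply: (mod_inj ch) => //; rewrite e.
rewrite (reindex_inj fi) /=.
by apply: eq_bigl => a; rewrite HP.
Qed.

Lemma sum_modh m h (P : pred nat) : 0 < m -> coprime h m ->
  (forall a, a < m -> P (h * a %% m) = P a) ->
  \sum_(a < m | P a) a = h * \sum_(a < m | P a) a %[mod m].
Proof.
move=> m0 ch HP; rewrite {1}(sum_reindex m0 ch HP) modn_summ big_distrr /=.
by rewrite -modn_summ.
Qed.

Lemma sum_or m (P1 P2 : pred nat) : (forall a, ~~ (P1 a && P2 a)) ->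
  \sum_(a < m | P1 a || P2 a) a = \sum_(a < m | P1 a) a + \sum_(a < m | P2 a) a.
Proof.
move=> D; rewrite (big_mkcond (fun a : 'I_m => P1 a || P2 a)) (big_mkcond (fun a : 'I_m => P1 a)) (big_mkcond (fun a : 'I_m => P2 a)) -big_split /=.
apply: eq_bigr => a _; have := D a; case: (P1 a); case: (P2 a) => // _; rewrite ?addn0 //=.
Qed.

Lemma prime_dvd_cases s q : prime q -> s %| q -> (s == 1) || (s == q).
Proof. by move=> pq sq; have [_ H] := primeP pq; exact: H. Qed.

Lemma arith1 o d q : prime q -> 0 < o -> o %| d -> d %| o * q ->
  (o == d) || (o == d %/ q).
Proof.
move=> pq o0 /dvdnP [t ->]; rewrite [o * q]mulnC dvdn_pmul2r // => /(prime_dvd_cases pq).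
case/orP => /eqP ->; first by rewrite mul1n eqxx.
by rewrite mulKn ?prime_gt0 // eqxx orbT.
Qed.

Lemma arith2 o d q : prime q -> q %| d -> 0 < d -> d %/ q %| o -> o %| d ->
  (o == d) || (o == d %/ q).
Proof.
move=> pq qd d0 /dvdnP [s ->].
have dq0 : 0 < d %/ q by rewrite divn_gt0 ?prime_gt0 // dvdn_leq.
move=> H; have : s * (d %/ q) %| q * (d %/ q) by rewrite [q * _]mulnC divnK.
rewrite dvdn_pmul2r // => /(prime_dvd_cases pq).
case/orP => /eqP ->; first by rewrite mul1n eqxx orbT.
by rewrite mulnC divnK // eqxx.
Qed.

Section OrdProd.
Variables (m h a q : nat).
Hypotheses (m1 : 1 < m) (ch : coprime h m) (ca : coprime a m) (pq : prime q)
  (hq : h ^ q = 1 %[mod m]).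

Lemma core k : q %| k -> ((h * a %% m) ^ k == 1 %[mod m]) = (a ^ k == 1 %[mod m]).
Proof.
move=> /dvdnP [c ->]; rewrite modnXm expnMn -modnMml (mulnC c q) modX1 //.
by rewrite modnMml mul1n.
Qed.

Lemma cx : coprime (h * a %% m) m.
Proof. by rewrite coprime_modl coprimeMl ch ca. Qed.

Lemma indA d : q * q %| d -> ind m a = d -> ind m (h * a %% m) = d.
Proof.
move=> qqd da.
have d0 : 0 < d by rewrite -da.
have qd : q %| d by apply: dvdn_trans qqd; apply: dvdn_mulr.
have qdq : q %| d %/ q by rewrite dvdn_divRL // mulnC.
have o1 : ind m (h * a %% m) %| d.
  by rewrite -ind_spec ?cx // core // ind_spec // da.
have o2 : d %| ind m (h * a %% m) * q.
  by rewrite -da -ind_spec // -core ?dvdn_mull // ind_spec ?cx // dvdn_mulr.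
have := arith1 pq (ind_gt0 _ _) o1 o2; case/orP => /eqP // E.
have : ind m (h * a %% m) %| d %/ q by rewrite E.
rewrite -ind_spec ?cx // core // ind_spec // da => /dvdn_leq.
rewrite divn_gt0 ?prime_gt0 // dvdn_leq // => /(_ isT).
rewrite leqNgt ltn_Pdiv ?prime_gt1 //.
Qed.

Lemma indB d : q %| d -> coprime q (d %/ q) ->
  (ind m a == d) || (ind m a == d %/ q) ->
  (ind m (h * a %% m) == d) || (ind m (h * a %% m) == d %/ q).
Proof.
move=> qd cqd H.
have d0 : 0 < d.
  case: d qd cqd H => // _ _; rewrite div0n orbb; by rewrite /ind.
have adv : ind m a %| d.
  case/orP: H => /eqP ->; first exact: dvdnn. exact: dvdn_div.
have dqa : d %/ q %| ind m a by case/orP: H => /eqP -> //; exact: dvdn_div.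
have o1 : ind m (h * a %% m) %| d.
  by rewrite -ind_spec ?cx // core // ind_spec.
have o2 : d %/ q %| ind m (h * a %% m).
  rewrite -(@Gauss_dvdr _ q); last by rewrite coprime_sym.
  apply: dvdn_trans dqa _.
  by rewrite -ind_spec // -core ?dvdn_mulr // ind_spec ?cx // dvdn_mull.
exact: arith2 pq qd d0 o2 o1.
Qed.
End OrdProd.

Lemma binom_p p y : prime p -> 2 < p -> p %| y ->
  exists T, (1 + y) ^ p = 1 + p * y + T /\ p * y ^ 2 %| T.
Proof.
move=> pp p2 py; case: p pp p2 py => [|[|[|k]]] // pp _ py.
rewrite expnDn big_ord_recl big_ord_recl big_ord_recr /=.
rewrite !exp1n !mul1n /bump /= ?add1n ?addn0 expn1 bin1 binn mul1n.
exists (\sum_(i < k.+1) 'C(k.+3, i.+2) * y ^ i.+2 + y ^ k.+3); split.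
  rewrite addSn; congr S; congr (_ + (_ + _)).
  by apply: eq_bigr => i _; rewrite exp1n mul1n.
apply: dvdn_add.
  apply: dvdn_sum => i _; apply: dvdn_mul.
    by apply: prime_dvd_bin => //; have := ltn_ord i; lia.
  by apply/dvdn_exp2l.
have [->|y0] := posnP y; first by rewrite !exp0n.
have -> : k.+3 = 2 + k.+1 by [].
rewrite expnD [k.+3 * _]mulnC dvdn_pmul2l; first exact: dvdn_exp.
by rewrite expn_gt0 y0.
Qed.

Lemma mod_weak d d' a b : d %| d' -> a = b %[mod d'] -> a = b %[mod d].
Proof. by move=> dd E; rewrite -(modn_dvdm a dd) E modn_dvdm. Qed.

Lemma cong1 d x : 1 < d -> x = 1 %[mod d] -> exists2 y, x = 1 + y & d %| y.
Proof.
move=> d1; case: x => [|y]; first by rewrite mod0n modn_small.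
move/eqP; rewrite eqn_mod_dvd // subn1 /= => dy; by exists y.
Qed.

Lemma cong1' d y : d %| y -> 1 + y = 1 %[mod d].
Proof. by move=> dy; apply/eqP; rewrite eqn_mod_dvd ?leq_addr // addKn. Qed.

Section LTE.
Variables (p : nat).
Hypotheses (pp : prime p) (p2 : 2 < p).

Lemma pgt1 i : 0 < i -> 1 < p ^ i.
Proof. by move=> i0; rewrite -(exp1n i) ltn_exp2r // prime_gt1. Qed.

Lemma up i x : 0 < i -> x = 1 %[mod p ^ i] -> x ^ p = 1 %[mod p ^ i.+1].
Proof.
move=> i0 /(cong1 (pgt1 i0)) [y -> dy].
have py : p %| y by apply: dvdn_trans dy; rewrite dvdn_exp // .
have [T [-> dT]] := binom_p pp p2 py.
rewrite -addnA; apply: cong1'; apply: dvdn_add.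
  by rewrite expnS dvdn_pmul2l ?prime_gt0.
apply: dvdn_trans dT; rewrite expnS dvdn_pmul2l ?prime_gt0 //.
by apply: dvdn_trans dy _; rewrite expnS dvdn_mull.
Qed.

Lemma upj i j x : 0 < i -> x = 1 %[mod p ^ i] -> x ^ (p ^ j) = 1 %[mod p ^ (i + j)].
Proof.
move=> i0 H; elim: j => [|j IH]; first by rewrite expn0 expn1 addn0.
rewrite expnSr expnM addnS; apply: up => //; lia.
Qed.

Lemma down1 i x : 0 < i -> x = 1 %[mod p ^ i] -> x ^ p = 1 %[mod p ^ i.+2] ->
  x = 1 %[mod p ^ i.+1].
Proof.
move=> i0 /(cong1 (pgt1 i0)) [y -> dy].
have py : p %| y by apply: dvdn_trans dy; rewrite dvdn_exp // .
have [T [-> dT]] := binom_p pp p2 py.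
rewrite -addnA => /eqP; rewrite eqn_mod_dvd ?leq_addr // addKn.
have dT' : p ^ i.+2 %| T.
  apply: dvdn_trans dT; rewrite expnS dvdn_pmul2l ?prime_gt0 //.
  apply: dvdn_trans (dvdn_mul dy dy); rewrite -expnD dvdn_exp2l //; lia.
rewrite dvdn_addl // expnS dvdn_pmul2l ?prime_gt0 // => H.
exact: cong1'.
Qed.

Lemma down_e e x : 0 < e -> x = 1 %[mod p] -> x ^ p = 1 %[mod p ^ e.+1] ->
  x = 1 %[mod p ^ e].
Proof.
move=> e0 x1 xp.
suff : forall i, 0 < i <= e -> x = 1 %[mod p ^ i] by apply; rewrite e0 leqnn.
elim => [|i IH] // /andP [_ ie].
case: i IH ie => [|i] IH ie; first by rewrite expn1.
apply: down1 => //; first by apply: IH; lia.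
by apply: mod_weak xp; apply: dvdn_exp2l; lia.
Qed.

Lemma downj j : forall n x, j < n -> x = 1 %[mod p] -> x ^ (p ^ j) = 1 %[mod p ^ n] ->
  x = 1 %[mod p ^ (n - j)].
Proof.
elim: j => [|j IH] n x jn x1 H; first by rewrite subn0; rewrite expn0 expn1 in H.
have x1' : x ^ p = 1 %[mod p] by rewrite -modnXm x1 modnXm exp1n.
rewrite expnS expnM in H.
have := IH n (x ^ p) (ltnW jn) x1' H.
have -> : n - j = (n - j.+1).+1 by lia.
by apply: down_e => //; lia.
Qed.

Lemma fermat_iter j x : x ^ (p ^ j) = x %[mod p].
Proof.
elim: j => [|j IH]; first by rewrite expn0 expn1.
by rewrite expnSr expnM fermat_little.
Qed.

Lemma charP a j : j < a -> forall x,
  (coprime x (p ^ a) && (x ^ (p ^ j) == 1 %[mod p ^ a])) = (x == 1 %[mod p ^ (a - j)]).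
Proof.
move=> ja x; apply/idP/idP.
- case/andP => _ /eqP H.
  have x1 : x = 1 %[mod p].
    by rewrite -(fermat_iter j x); apply: mod_weak H; rewrite dvdn_exp //; lia.
  by apply/eqP; apply: downj.
- move/eqP=> H; apply/andP; split.
    rewrite coprime_pexpr; last lia.
    have : x = 1 %[mod p] by apply: mod_weak H; rewrite dvdn_exp //; lia.
    by rewrite -coprime_modl => ->; rewrite coprime_modl coprime1n.
  have := upj j (_ : 0 < a - j) H; rewrite subnK; last lia.
  by move=> -> //; lia.
Qed.
End LTE.

Lemma big_shift0 a n (P : pred nat) (F : nat -> nat) :
  \sum_(a <= i < a + n | P i) F i = \sum_(0 <= i < n | P (i + a)) F (i + a).
Proof. by rewrite -{1}[a]add0n big_addn addKn. Qed.

Lemma sum_cong1 N M : 1 < M ->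
  \sum_(0 <= a < N * M | a %% M == 1) a = N + M * 'C(N, 2).
Proof.
move=> M1; elim: N => [|N IH]; first by rewrite mul0n big_geq // bin_small ?muln0.
rewrite mulSn (@big_cat_nat _ _ _ (N * M)) ?leq_addl //=.
rewrite IH [M + _]addnC big_shift0.
rewrite (eq_bigl (fun i => i %% M == 1)); last by move=> i; rewrite addnC modnMDl.
rewrite big_mkord (big_pred1 (Ordinal M1)) /=; last first.
  by move=> i; rewrite /= modn_small.
rewrite binS bin1 mulnDr; lia.
Qed.

Lemma Tsum p al j : prime p -> odd p -> j < al ->
  \sum_(a < p ^ al | coprime a (p ^ al) && (ind (p ^ al) a %| p ^ j)) a = p ^ j %[mod p ^ al].
Proof.
move=> pp op ja.
have p2 : 2 < p by have := prime_gt1 pp; case: p pp op => [|[|[|]]].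
have m1 : 1 < p ^ al by apply: pgt1 => //; lia.
have M1 : 1 < p ^ (al - j) by apply: pgt1 => //; lia.
rewrite (eq_bigl (fun a : 'I_(p ^ al) => a %% p ^ (al - j) == 1)); last first.
  move=> a /=; have := charP pp p2 ja a; rewrite (modn_small M1) => <-.
  by case c: (coprime a (p ^ al)) => //=; rewrite ind_spec.
rewrite -(big_mkord (fun a => a %% p ^ (al - j) == 1) (fun a => a)).
have -> : p ^ al = p ^ j * p ^ (al - j) by rewrite -expnD subnKC // ltnW.
rewrite sum_cong1 // bin2odd; last by rewrite oddX op orbT.
set c := (_.-1./2).
rewrite (mulnCA (p ^ (al - j))) [p ^ (al - j) * c]mulnC mulnA [p ^ j * c]mulnC -mulnA.
by rewrite addnC modnMDl.
Qed.

Lemma carmE m : carmichael m = (find (fun k => all (fun a => coprime a m ==> (a ^ k.+1 == 1 %[mod m])) (iota 0 m)) (iota 0 m)).+1.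
Proof.
rewrite /carmichael; congr S; apply: eq_find => k.
apply/forallP/allP => H.
- by move=> a; rewrite mem_iota => /andP[_ am]; exact: (H (Ordinal am)).
- by move=> a; apply: H; rewrite mem_iota /= ltn_ord.
Qed.
Lemma sumE m d : sum_ind m d = \sum_(0 <= a < m | coprime a m && (ind m a == d)) a.
Proof. by rewrite /sum_ind big_mkord. Qed.
Lemma c2 : carmichael 2 = 1. Proof. by rewrite carmE; vm_compute. Qed.
Lemma c4 : carmichael 4 = 2. Proof. by rewrite carmE; vm_compute. Qed.
Lemma c8 : carmichael 8 = 2. Proof. by rewrite carmE; vm_compute. Qed.
Lemma s21 : sum_ind 2 1 = 1. Proof. by rewrite sumE unlock; vm_compute. Qed.
Lemma s41 : sum_ind 4 1 = 1. Proof. by rewrite sumE unlock; vm_compute. Qed.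
Lemma s42 : sum_ind 4 2 = 3. Proof. by rewrite sumE unlock; vm_compute. Qed.
Lemma s81 : sum_ind 8 1 = 1. Proof. by rewrite sumE unlock; vm_compute. Qed.
Lemma s82 : sum_ind 8 2 = 15. Proof. by rewrite sumE unlock; vm_compute. Qed.
Lemma p123 :
  (forall d : nat, 0 < d -> d %| carmichael 2 -> sum_ind 2 d = 1 %[mod 2])
  /\ (forall d : nat, 0 < d -> d %| carmichael 4 ->
        ((sum_ind 4 d)%:Z = (-1) ^+ d.+1 %[mod 4])%Z)
  /\ (forall d : nat, 0 < d -> d %| carmichael 8 ->
        ((sum_ind 8 d)%:Z = (-1) ^+ d.+1 %[mod 8])%Z).
Proof.
have two : forall d, 0 < d -> d %| 2 -> d = 1 \/ d = 2.
  move=> d d0 /(dvdn_leq (isT : 0 < 2)); case: d d0 => [|[|[|]]] //; by [left|right].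
split; first by move=> d d0; rewrite c2 dvdn1 => /eqP ->; rewrite s21.
split.
  by move=> d d0; rewrite c4 => /(two _ d0) [] ->; [rewrite s41|rewrite s42].
by move=> d d0; rewrite c8 => /(two _ d0) [] ->; [rewrite s81|rewrite s82].
Qed.

Import GRing.Theory.

Lemma kill m h (P : pred nat) : 0 < m -> coprime h m -> 0 < h -> coprime h.-1 m ->
  (forall a, a < m -> P (h * a %% m) = P a) ->
  \sum_(a < m | P a) a = 0 %[mod m].
Proof.
move=> m0 ch h0 ch1 HP; have := sum_modh m0 ch HP.
set S := \sum_(a < m | P a) a.
have -> : h * S = S + h.-1 * S by rewrite -{1}(prednK h0) mulSn.
rewrite -{1}[S]addn0 => /eqP; rewrite eqn_modDl eq_sym.
rewrite eqn_mod_dvd // subn0 Gauss_dvdr; last by rewrite coprime_sym.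
by move=> H; apply/eqP; rewrite eqn_mod_dvd // subn0.
Qed.

Lemma back m h q a : h ^ q = 1 %[mod m] -> 0 < q -> a < m ->
  h ^ q.-1 * (h * a %% m) %% m = a.
Proof.
move=> hq q0 am; rewrite modnMmr mulnA -expnSr prednK // -modnMml hq modnMml mul1n.
by rewrite modn_small.
Qed.

Lemma Pinv m h q (R : pred nat) : 1 < m -> coprime h m -> 0 < q -> h ^ q = 1 %[mod m] ->
  (forall h' a, coprime h' m -> h' ^ q = 1 %[mod m] -> coprime a m ->
     R (ind m a) -> R (ind m (h' * a %% m))) ->
  forall a, a < m ->
  (coprime (h * a %% m) m && R (ind m (h * a %% m))) = (coprime a m && R (ind m a)).
Proof.
move=> m1 ch q0 hq H a am; apply/idP/idP.
- case/andP => c1 r1.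
  have ca : coprime a m by move: c1; rewrite coprime_modl coprimeMl => /andP[].
  rewrite ca /=.
  have := H (h ^ q.-1) _ (coprimeXl _ ch) _ c1 r1; rewrite back //; apply.
  by rewrite -expnM mulnC expnM -modnXm hq modnXm exp1n.
- case/andP => ca r; rewrite coprime_modl coprimeMl ch ca /=.
  exact: H.
Qed.

Lemma moeb1 : moebius 1 = 1%R.
Proof. by []. Qed.

Lemma moeb_sq n q : prime q -> q * q %| n -> moebius n = 0%R.
Proof.
move=> pq qqn; rewrite /moebius; case: eqP => [//|/eqP]; rewrite -lt0n => n0.
 case: ifP => // /allP H.
have : q \in primes n by rewrite mem_primes pq n0 (dvdn_trans (dvdn_mulr q (dvdnn q)) qqn).
move/H/eqP => l1.
have := qqn; rewrite -{1}(expn1 q) -expnSr pfactor_dvdn // l1 //.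
Qed.

Lemma moebM n q : prime q -> 0 < n -> ~~ (q %| n) -> moebius (q * n) = (- moebius n)%R.
Proof.
move=> pq n0 qn.
have qn0 : 0 < q * n by rewrite muln_gt0 prime_gt0.
have qnp : q \notin primes n by rewrite mem_primes (negbTE qn) !andbF.
have pe : perm_eq (primes (q * n)) (q :: primes n).
  apply: uniq_perm; first exact: primes_uniq.
    by rewrite /= qnp primes_uniq.
  by move=> x; rewrite (primesM _ (prime_gt0 pq) n0) primes_prime // !inE.
rewrite /moebius (gtn_eqF n0) (gtn_eqF qn0) (perm_size pe) (perm_all _ pe) /=.
have cqn : coprime q n by rewrite prime_coprime.
rewrite (lognM _ (prime_gt0 pq) n0) logn_prime // eqxx (logn_coprime cqn) /=.
rewrite (@eq_in_all _ _ (fun p => logn p n == 1)); last first.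
  move=> x xn; rewrite (lognM _ (prime_gt0 pq) n0) logn_prime //.
  suff -> : (x == q) = false by [].
  by apply/negbTE; apply: contraNneq qnp => <-.
by case: ifP => _; rewrite ?oppr0 // exprS mulN1r.
Qed.

Lemma gcd_split d q P : prime q -> ~~ (q %| d) -> q %| P -> gcdn (q * d) P = q * gcdn d P.
Proof.
move=> pq qd qP; apply/eqP; rewrite eqn_dvd; apply/andP; split.
  rewrite muln_gcdr dvdn_gcd dvdn_gcdl /=.
  by apply: dvdn_mull; exact: dvdn_gcdr.
have cq : coprime q (gcdn d P).
  rewrite prime_coprime //; apply: contra qd => H; exact: dvdn_trans H (dvdn_gcdl _ _).
rewrite dvdn_gcd; apply/andP; split; first exact: dvdn_mul (dvdnn q) (dvdn_gcdl d P).
by rewrite Gauss_dvd // qP dvdn_gcdr.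
Qed.

Import GRing.Theory FinRing.Theory.

Lemma exists_g p q : prime p -> prime q -> q %| p.-1 ->
  exists g, [/\ 1 < g, g < p & g ^ q = 1 %[mod p]].
Proof.
move=> pp pq qp.
have p1 := prime_gt1 pp.
have cq : q %| #|units_Zp p| by rewrite card_units_Zp ?prime_gt0 // totient_prime.
have [u _ ou] := Cauchy pq cq.
have uq : (u ^+ q)%g = 1%g by rewrite -ou expg_order.
have zq : ((val u) ^+ q)%R = 1%R :> 'Z_p by rewrite -val_unitX uq.
set z := val u in zq.
set g := nat_of_ord z.
have zE : z = (g%:R)%R by rewrite natr_Zp.
have zq' : (((g ^ q)%:R)%R : 'Z_p) = 1%R by rewrite natrX -zE.
have zg : g ^ q %% p = 1.
  have := congr1 (@nat_of_ord _) zq'; rewrite val_Zp_nat // => ->.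
have gp : g < p by rewrite -(Zp_cast p1); exact: ltn_ord.
have g0 : g != 0.
  by apply/eqP => E; move: zg; rewrite E exp0n ?prime_gt0 // mod0n.
have g1 : g != 1.
  apply/eqP => E.
  have u1 : u = 1%g.
    apply: val_inj; rewrite val_unit1 -/z zE E //.
  by move: ou; rewrite u1 order1 => E1; move: pq; rewrite -E1.
exists g; split => //; first by move: g0 g1; case: (g) => [|[|]].
by rewrite zg modn_small.
Qed.

Lemma coprime_small p x : prime p -> 0 < x < p -> coprime x p.
Proof.
move=> pp /andP [x0 xp]; rewrite coprime_sym prime_coprime //.
by apply/negP => /(dvdn_leq x0); rewrite leqNgt xp.
Qed.

Lemma exists_h p al q : prime p -> odd p -> 0 < al -> prime q -> q %| p.-1 ->
  exists h, [/\ 0 < h, coprime h (p ^ al), coprime h.-1 (p ^ al) & h ^ q = 1 %[mod p ^ al]].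
Proof.
move=> pp op al0 pq qp.
have p2 : 2 < p by have := prime_gt1 pp; case: p pp op {qp} => [|[|[|]]].
have [g [g1 gp gq]] := exists_g pp pq qp.
set h := g ^ (p ^ al.-1).
have hg : h = g %[mod p] by rewrite /h fermat_iter.
have h0 : 0 < h by rewrite expn_gt0; case: (g) g1.
exists h; split => //.
- rewrite coprime_pexpr // -coprime_modl hg coprime_modl; apply: coprime_small => //.
  by rewrite gp andbT; case: (g) g1.
- rewrite coprime_pexpr // -coprime_modl.
  have : h.-1 = g.-1 %[mod p].
    apply/eqP; rewrite -(eqn_modDl 1) !add1n !prednK //; first by apply/eqP.
    by case: (g) g1.
  move=> ->; rewrite coprime_modl; apply: coprime_small => //; apply/andP; split.
    by case: (g) g1 => [|[|]].
  by apply: leq_ltn_trans gp; apply: leq_pred.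
- rewrite /h expnAC.
  have := upj pp p2 (al.-1) (_ : 0 < 1) (_ : g ^ q = 1 %[mod p ^ 1]).
  by rewrite add1n prednK //; apply; rewrite // expn1.
Qed.

Import GRing.Theory.

Lemma natmodz a b m : a = b %[mod m] -> (a%:Z = b%:Z %[mod m%:Z])%Z.
Proof. by move=> E; rewrite !modz_nat E. Qed.

Lemma dvd_pS p k d : prime p -> (d %| p ^ k.+1) = (d == p ^ k.+1) || (d %| p ^ k).
Proof.
move=> pp; apply/idP/idP.
- case/(dvdn_pfactor _ _ pp) => e le ->.
  case: (ltngtP e k.+1) => [lt|gt|->].
  + by rewrite dvdn_exp2l ?orbT // -ltnS.
  + by move: gt le; lia.
  + by rewrite eqxx.
- move=> /orP [/eqP ->|H] //; apply: dvdn_trans H _; exact: dvdn_exp2l.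
Qed.

Lemma Fpk p al k : prime p -> odd p -> k < al ->
  sum_ind (p ^ al) (p ^ k) = totient (p ^ k) %[mod p ^ al].
Proof.
move=> pp op kal.
case: k kal => [|k] kal.
  have T := Tsum pp op kal; rewrite expn0 in T.
  rewrite expn0 (_ : totient 1 = 1) // -T /sum_ind; congr (_ %% _).
  by apply: eq_bigl => a; rewrite dvdn1.
have T1 := Tsum pp op kal.
have T0 := Tsum pp op (ltnW kal).
rewrite (eq_bigl (fun a : 'I_(p ^ al) => (coprime a (p ^ al) && (ind (p ^ al) a == p ^ k.+1))
   || (coprime a (p ^ al) && (ind (p ^ al) a %| p ^ k)))) in T1; last first.
  by move=> a; rewrite dvd_pS // andb_orr.
rewrite (@sum_or _ (fun a => coprime a (p ^ al) && (ind (p ^ al) a == p ^ k.+1))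
  (fun a => coprime a (p ^ al) && (ind (p ^ al) a %| p ^ k))) in T1; last first.
  move=> a; apply/negP => /andP [/andP [_ /eqP ->] /andP [_]].
  by apply/negP; rewrite dvdn_Pexp2l ?prime_gt1 // ltnn.
move: T1; rewrite -modnDmr T0 modnDmr -/(sum_ind _ _) => T1.
apply/eqP; rewrite -(eqn_modDr (p ^ k)) T1.
by rewrite totient_pfactor // -mulSnr prednK ?prime_gt0 // -expnS.
Qed.

Lemma part5 p al : prime p -> odd p -> 0 < al -> forall d, 0 < d -> d %| p ^ al.-1 * p.-1 ->
  ((sum_ind (p ^ al) d)%:Z = moebius (gcdn d p.-1) * (totient (p ^ logn p d))%:Z
     %[mod (p ^ al)%:Z])%Z.
Proof.
move=> pp op al0; elim/ltn_ind => d IH d0 dd.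
have p2 : 2 < p by have := prime_gt1 pp; case: p pp op {IH dd} => [|[|[|]]].
have m1 : 1 < p ^ al by apply: pgt1.
have pm1 : 0 < p.-1 by move: p2; clear; lia.
case: (leqP (gcdn d p.-1) 1) => g1.
  have cg : coprime d p.-1 by rewrite /coprime eqn_leq g1 gcdn_gt0 pm1 orbT.
  have : d %| p ^ al.-1 by rewrite -(Gauss_dvdl _ cg).
  case/(dvdn_pfactor _ _ pp) => k kal dE.
  rewrite dE in cg *; rewrite pfactorK // (eqP cg) moeb1 mul1r.
  apply: natmodz; apply: Fpk => //; lia.
set q := pdiv (gcdn d p.-1).
have pq : prime q by apply: pdiv_prime.
have qg : q %| gcdn d p.-1 by apply: pdiv_dvd.
have qd : q %| d by apply: dvdn_trans qg (dvdn_gcdl _ _).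
have qp : q %| p.-1 by apply: dvdn_trans qg (dvdn_gcdr _ _).
have qnp : q != p.
  apply/eqP => E; move: qp; rewrite E => /(dvdn_leq pm1); rewrite leqNgt.
  by move: p2; clear; lia.
have cqp : coprime q (p ^ al.-1).
  by apply: coprimeXr; rewrite prime_coprime // dvdn_prime2.
have [h [h0 ch ch1 hq]] := exists_h pp op al0 pq qp.
have ch1' : coprime h.-1 (p ^ al) by [].
set s := d %/ q.
have dE : d = q * s by rewrite mulnC divnK.
have s0 : 0 < s by rewrite divn_gt0 ?prime_gt0 // dvdn_leq.
have q0 : 0 < q := prime_gt0 pq.
case: (boolP (q %| s)) => qs.
- have qqd : q * q %| d by rewrite dE dvdn_mul.
  have qqp : q * q %| p.-1.
    rewrite -(Gauss_dvdr _ (_ : coprime (q * q) (p ^ al.-1))); first exact: dvdn_trans qqd dd.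
    by rewrite coprimeMl cqp.
  rewrite (moeb_sq pq (_ : q * q %| gcdn d p.-1)); last by rewrite dvdn_gcd qqd.
  rewrite mul0r; apply: natmodz.
  rewrite /sum_ind.
  apply: (kill (h := h) (P := fun a => coprime a (p ^ al) && (ind (p ^ al) a == d))) => //.
    exact: ltnW.
  move=> a am.
  apply: (Pinv (h := h) (q := q) (R := fun o => o == d)) => // h' b ch' hq' cb /eqP bd.
  by apply/eqP; exact: (indA m1 ch' cb pq hq' qqd bd).
- have cqs : coprime q s by rewrite prime_coprime.
  have sd : s < d by rewrite dE ltn_Pmull ?prime_gt1.
  have sdd : s %| p ^ al.-1 * p.-1 by apply: dvdn_trans dd; rewrite dE dvdn_mull.
  have IHs := IH s sd s0 sdd.
  have Hsum : sum_ind (p ^ al) d + sum_ind (p ^ al) s = 0 %[mod p ^ al].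
    rewrite /sum_ind -(@sum_or _ (fun a => coprime a (p ^ al) && (ind (p ^ al) a == d))
      (fun a => coprime a (p ^ al) && (ind (p ^ al) a == s))); last first.
      move=> a; apply/negP => /andP [/andP [_ /eqP ->] /andP [_ /eqP E]].
      by move: sd; rewrite E ltnn.
    rewrite (eq_bigl (fun a : 'I_(p ^ al) => coprime a (p ^ al) &&
      ((ind (p ^ al) a == d) || (ind (p ^ al) a == d %/ q)))); last first.
      by move=> a; rewrite andb_orr.
    apply: (kill (h := h) (P := fun a => coprime a (p ^ al) &&
      ((ind (p ^ al) a == d) || (ind (p ^ al) a == d %/ q)))) => //.
      exact: ltnW.
    move=> a am.
    apply: (Pinv (h := h) (q := q) (R := fun o => (o == d) || (o == d %/ q))) => // h' b ch' hq' cb bd.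
    exact: (indB m1 ch' cb pq hq' qd cqs bd).
  have gE : gcdn d p.-1 = q * gcdn s p.-1 by rewrite dE gcd_split.
  have lE : logn p d = logn p s.
    by rewrite dE lognM // logn_prime // eq_sym (negbTE qnp).
  rewrite gE moebM //; last first.
    by apply: contra qs => H; apply: dvdn_trans H (dvdn_gcdl _ _).
    by rewrite gcdn_gt0 pm1 orbT.
  rewrite lE; move: IHs (natmodz Hsum).
  set Fd := Posz (sum_ind _ d); set Fs := Posz (sum_ind _ s); set X := (moebius _ * _)%R.
  move/eqP; rewrite eqz_mod_dvd => H1 /eqP; rewrite eqz_mod_dvd => H2.
  apply/eqP; rewrite eqz_mod_dvd.
  have -> : (Fd - (- moebius (gcdn s p.-1) * (totient (p ^ logn p s))%:Z) = (Fd + Fs - 0) - (Fs - X))%R.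
    by rewrite /X mulNr; ring.
  by apply: rpredB => //; rewrite -PoszD.
Qed.


Lemma part4 al be : 3 < al -> 1 < be -> be <= al - 2 ->
  sum_ind (2 ^ al) (2 ^ be) = 0 %[mod 2 ^ al].
Proof.
move=> al3 be1 beal.
set m := 2 ^ al; set d := 2 ^ be.
have m1 : 1 < m by rewrite /m -(exp1n al) ltn_exp2r //; lia.
have m0 : 0 < m by lia.
have p2 : prime 2 by [].
have qqd : 2 * 2 %| d.
  by rewrite /d (_ : 2 * 2 = 2 ^ 2) // dvdn_exp2l.
set P := fun a => coprime a m && (ind m a == d).
have HP : forall h, coprime h m -> h ^ 2 = 1 %[mod m] -> forall a, a < m -> P (h * a %% m) = P a.
  move=> h ch hq a am.
  apply: (Pinv (h := h) (q := 2) (R := fun o => o == d)) => // h' b ch' hq' cb /eqP bd.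
  by apply/eqP; exact: (indA m1 ch' cb p2 hq' qqd bd).
have Podd : forall a, P a -> odd a.
  by move=> a /andP [ca _]; move: ca; rewrite coprime_pexpr ?coprimen2 //; lia.
set S := \sum_(a < m | P a) a.
set N := \sum_(a < m | P a) 1.
have h1c : coprime m.-1 m by apply: coprimePn.
have h1q : m.-1 ^ 2 = 1 %[mod m].
  have -> : m.-1 ^ 2 = m.-2 * m + 1.
    by case: (m) m1 => [|[|n]] // _; rewrite /= -[n.+2]addn2; rewrite !expnS expn0; nia.
  by rewrite modnMDl.
have E1 : S + S = N * m.
  rewrite {2}/S (sum_reindex m0 h1c (HP _ h1c h1q)) -big_split big_distrl /=.
  apply: eq_bigr => a Pa.
  have a0 : 0 < a by have := Podd _ Pa; case: (nat_of_ord a).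
  have -> : m.-1 * a = a.-1 * m + (m - a).
    have := ltn_ord a; rewrite -/m => am.
    case: (nat_of_ord a) a0 am => [|a'] // _ am /=.
    case: (m) am m1 => [|m'] //= am _; nia.
  rewrite modnMDl modn_small; last by have := ltn_ord a; rewrite -/m; lia.
  by rewrite mul1n subnKC // ltnW.
set h := 1 + 2 ^ al.-1.
have mE : m = 2 * 2 ^ al.-1 by rewrite /m -expnS prednK //; lia.
have hc : coprime h m.
  by rewrite /m coprime_pexpr ?coprimen2 /h ?oddD ?oddX //; lia.
have hq : h ^ 2 = 1 %[mod m].
  have tE : 2 ^ al.-1 = 2 * 2 ^ al.-2 by rewrite -expnS; congr (_ ^ _); lia.
  have -> : h ^ 2 = (1 + 2 ^ al.-2) * m + 1.
    rewrite /h mE tE; set t := 2 ^ al.-2; rewrite expnS expn1; nia.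
  by rewrite modnMDl.
have E2 : S = S + N * 2 ^ al.-1 %[mod m].
  rewrite {1}/S (sum_reindex m0 hc (HP _ hc hq)).
  rewrite (eq_bigr (fun a : 'I_m => (a + 2 ^ al.-1) %% m)); last first.
    move=> a Pa; have := odd_double_half a; rewrite (Podd _ Pa).
    set b := (nat_of_ord a)./2 => <-.
    have -> : h * (true + b.*2) = b * m + (true + b.*2 + 2 ^ al.-1).
      rewrite /h mE; set t := 2 ^ al.-1; rewrite -muln2 /=.
      rewrite !mulnDl !mulnDr !mul1n !muln1 !addnA; lia.
    by rewrite modnMDl.
  rewrite modn_summ big_split /= big_distrl /=.
  by congr (_ %% _); congr (_ + _); apply: eq_bigr => a _; rewrite mul1n.
have N2 : 2 %| N.
  move: E2; rewrite -{1}[S]addn0 => /eqP; rewrite eqn_modDl eq_sym.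
  rewrite eqn_mod_dvd // subn0 mE [N * _]mulnC [2 * _]mulnC dvdn_pmul2l ?expn_gt0 //.
move: N2 => /dvdnP [c Nc].
change (S = 0 %[mod m]).
have -> : S = c * m.
  move: E1; rewrite Nc mulnAC => E.
  by apply/eqP; rewrite -(eqn_pmul2r (isT : 0 < 2)) -E muln2 addnn.
by rewrite modnMl mod0n.
Qed.


Theorem theorem1p8 :
  (forall d : nat, 0 < d -> d %| carmichael 2 -> sum_ind 2 d = 1 %[mod 2])
  /\ (forall d : nat, 0 < d -> d %| carmichael 4 ->
        ((sum_ind 4 d)%:Z = (-1) ^+ d.+1 %[mod 4])%Z)
  /\ (forall d : nat, 0 < d -> d %| carmichael 8 ->
        ((sum_ind 8 d)%:Z = (-1) ^+ d.+1 %[mod 8])%Z)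
  /\ (forall alpha beta : nat, 3 < alpha -> 1 < beta -> beta <= alpha - 2 ->
        sum_ind (2 ^ alpha) (2 ^ beta) = 0 %[mod 2 ^ alpha])
  /\ (forall p alpha d : nat, prime p -> odd p -> 0 < alpha ->
        0 < d -> d %| carmichael (p ^ alpha) ->
        ((sum_ind (p ^ alpha) d)%:Z
           = moebius (gcdn d p.-1) * (totient (p ^ logn p d))%:Z
           %[mod (p ^ alpha)%:Z])%Z).
Proof.
have [H1 [H2 H3]] := p123.
split; first exact: H1. split; first exact: H2. split; first exact: H3. split.
  by move=> al be a3 b1 ba; exact: part4.
move=> p al d pp op al0 d0 dd; apply: part5 => //.
have p2 : 2 < p by have := prime_gt1 pp; case: p pp op {dd} => [|[|[|]]].
have m1 : 1 < p ^ al by apply: pgt1.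
apply: dvdn_trans dd _; have := carm_dvd m1; rewrite totient_pfactor // => H.
by rewrite mulnC.
Qed.
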